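(* Let $\mathcal{H}$ be a separable infinite-dimensional complex Hilbert space, let $T\in\mathscr{B}(\mathcal{H})$ have dense range and let $\varepsilon>0$. Then the map $x_0\mapsto\|y_{x_0,\varepsilon}\|$ is continuous on the open set $\{x_0\in\mathcal{H}:\|x_0\|>\varepsilon\}$.
   Context: For $T\in\mathscr{B}(\mathcal{H})$ with dense range, $x_0\neq 0$ and $0<\varepsilon<\|x_0\|$, the extremal vector $y_{x_0,\varepsilon}$ is the unique vector $y_0\in\mathcal{H}$ with $\|Ty_0-x_0\|\leqslant\varepsilon$ and $\|y_0\|=\inf\{\|y\|:\|Ty-x_0\|\leqslant\varepsilon\}$. *)

(* Defs.v *)
From HB Require Import structures.
From mathcomp Require Import all_boot all_order all_algebra.
From mathcomp Require Import all_classical all_reals all_analysis.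
From mathcomp Require Import complex.
Set Implicit Arguments. Unset Strict Implicit. Unset Printing Implicit Defensive.
Import Order.TTheory GRing.Theory Num.Theory.
Import numFieldNormedType.Exports.
Local Open Scope classical_set_scope.
Local Open Scope ring_scope.

Section HilbertDefs.
Variable R : realType.
Local Notation C := (R[i]).
Variable H : normedModType C.

(* ip is an inner product on H inducing the norm of H:
   linear in the first argument, conjugate symmetric, and <x,x> = ||x||^2.
   (Positive definiteness follows from the norm axioms.) *)
Definition inner_product_of_norm (ip : H -> H -> C) : Prop :=
  [/\ forall (a : C) (x y z : H), ip (a *: x + y) z = a * ip x z + ip y z,
      forall x y : H, ip y x = conjc (ip x y)
    & forall x : H, ip x x = `|x| ^+ 2].

Definition separable_space : Prop :=
  exists D : set H, countable D /\ dense D.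

Definition infinite_dimensional : Prop :=
  forall (n : nat) (v : 'I_n -> H),
    exists x : H, forall c : 'I_n -> C, x <> \sum_(i < n) c i *: v i.

(* real-valued norm ||x|| (the norm of H is C-valued, with real values) *)
Definition rnorm (x : H) : R := complex.Re `|x|.

Definition is_extremal_vector (T : H -> H) (x0 : H) (eps : R) (y0 : H) : Prop :=
  rnorm (T y0 - x0) <= eps /\
  rnorm y0 = inf [set rnorm y | y in [set y : H | rnorm (T y - x0) <= eps]].

(* y_{x0,eps}: the (unique, by the paper) extremal vector, chosen by xget *)
Definition extremal_vector (T : H -> H) (eps : R) (x0 : H) : H :=
  xget 0 (is_extremal_vector T x0 eps).

End HilbertDefs.

(* Main.v *)
Require Import Defs.
From HB Require Import structures.
From mathcomp Require Import all_boot all_order all_algebra.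
From mathcomp Require Import all_classical all_reals all_analysis.
From mathcomp Require Import complex.
From mathcomp Require Import ring lra.
Import Order.TTheory GRing.Theory Num.Theory.
Import numFieldNormedType.Exports.
Local Open Scope classical_set_scope.
Local Open Scope ring_scope.
Local Open Scope complex_scope.



Section S.
Variable R : realType.
Variable H : completeNormedModType R[i].

Lemma normE (x : H) : `|x| = (rnorm x)%:C.
Proof. by rewrite /rnorm RRe_real // normr_real. Qed.

Lemma rnorm_ge0 (x : H) : 0 <= rnorm x.
Proof. by rewrite -ler0c -normE. Qed.

Lemma rnormD (x y : H) : rnorm (x + y) <= rnorm x + rnorm y.
Proof. by rewrite -lecR rmorphD /= -!normE ler_normD. Qed.

Lemma rnormN (x : H) : rnorm (- x) = rnorm x.
Proof. by rewrite /rnorm normrN. Qed.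

Lemma rnormB (x y : H) : rnorm (x - y) = rnorm (y - x).
Proof. by rewrite /rnorm distrC. Qed.

Lemma rnormZ (s : R) (x : H) : 0 <= s -> rnorm (s%:C *: x) = s * rnorm x.
Proof.
move=> s0; apply: complexI; rewrite -normE normrZ ger0_norm ?ler0c // normE.
by rewrite rmorphM.
Qed.

Lemma rnorm_lt (x : H) (e : R[i]) : 0 < e -> (`|x| < e) = (rnorm x < complex.Re e).
Proof.
move=> e0; have er : e \is Num.real by rewrite realE ltW.
by rewrite -{1}(RRe_real er) normE ltcR.
Qed.
End S.



Section S.
Variable R : realType.
Variable H : completeNormedModType R[i].
Variable ip : H -> H -> R[i].
Hypothesis Hip : inner_product_of_norm ip.

Lemma paral (x y : H) :
  rnorm (x + y) ^+ 2 + rnorm (x - y) ^+ 2 = 2 * rnorm x ^+ 2 + 2 * rnorm y ^+ 2.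
Proof.
case: Hip => lin sym nrm.
have sq v : (rnorm v ^+ 2)%:C = ip v v by rewrite nrm normE -rmorphXn.
have ipD1 a b c : ip (a + b) c = ip a c + ip b c.
  by rewrite -{1}(scale1r a) lin mul1r.
have ip0 c : ip 0 c = 0.
  have := ipD1 0 0 c; rewrite addr0.
  by move=> /(congr1 (fun t => t - ip 0 c)); rewrite subrr addrK.
have ipN1 a c : ip (- a) c = - ip a c.
  by rewrite -(addr0 (- a)) -scaleN1r lin ip0 addr0 mulN1r.
have ipD2 a b c : ip c (a + b) = ip c a + ip c b.
  by rewrite sym ipD1 rmorphD /= -!sym.
have ipN2 a c : ip c (- a) = - ip c a.
  by rewrite sym ipN1 rmorphN /= -sym.
have sq2 v : ((2 * rnorm v ^+ 2))%:C = 2 * ip v v.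
  by rewrite rmorphM /= sq rmorph_nat.
apply: complexI; rewrite !rmorphD /= !sq2 !sq.
rewrite !ipD1 !ipD2 !ipN1 !ipN2.
by rewrite opprK; ring.
Qed.
End S.



Section S.
Variable R : realType.
Variable H : completeNormedModType R[i].
Variable T : {linear H -> H}.
Hypothesis Tcont : continuous T.
Hypothesis Tdense : closure (range T) = setT.

Lemma near_pt (x : H) (e : R) : 0 < e -> \forall t \near x, rnorm (t - x) < e.
Proof.
move=> e0.
have : (fun t : H => t) @ x --> x by exact: cvg_id.
move=> /cvgr_dist_lt /(_ e%:C); rewrite ltcR => /(_ e0).
apply: filterS => t; by rewrite rnorm_lt ?ltcR //= rnormB.
Qed.

Lemma dense_pt (x : H) (e : R) : 0 < e -> exists z, rnorm (T z - x) < e.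
Proof.
move=> e0; have : closure (range T) x by rewrite Tdense.
move=> /(_ _ (near_pt x e e0)) [_ [[z _ <-] Hz]].
by exists z.
Qed.
End S.



Section S.
Variable R : realType.
Variable H : completeNormedModType R[i].
Variable T : {linear H -> H}.
Hypothesis Tcont : continuous T.
Hypothesis Tdense : closure (range T) = setT.
Variable eps : R.
Hypothesis heps : 0 < eps.

Definition Kset (x : H) := [set y : H | rnorm (T y - x) <= eps].
Definition fv (x : H) := inf [set rnorm y | y in Kset x].

Lemma fv_hasinf x : has_inf [set rnorm y | y in Kset x].
Proof.
split.
  have [z hz] := @dense_pt _ _ T Tdense x eps heps.
  by exists (rnorm z), z => //; rewrite /Kset /= ltW.
by exists 0 => _ [y _ <-]; exact: rnorm_ge0.
Qed.

Lemma fv_le x y : Kset x y -> fv x <= rnorm y.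
Proof.
move=> hy; apply: (ge_inf (proj2 (fv_hasinf x))).
by exists y.
Qed.

Lemma fv_ge0 x : 0 <= fv x.
Proof.
apply: lb_le_inf; first exact: (proj1 (fv_hasinf x)).
by move=> _ [y _ <-]; exact: rnorm_ge0.
Qed.

Lemma comb_eq (y z a b : H) (s : R) :
  T ((1 - s)%:C *: y + s%:C *: z) - b =
  (1 - s)%:C *: (T y - a) + s%:C *: (T z - a) + (a - b).
Proof.
rewrite linearD !linearZ /= !scalerBr.
have -> : (1 - s)%:C *: a = a - s%:C *: a.
  by rewrite rmorphB rmorph1 /= scalerBl scale1r.
rewrite !addrA; congr (_ + _).
rewrite opprB addrC !addrA.
set p := (1 - s)%:C *: T y; set q := s%:C *: a; set r := s%:C *: T z.
by rewrite (addrAC (a + p)) (addrC a p) addrK (addrAC (p + q)) addrK.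
Qed.

Lemma shift (a b z : H) (g : R) : 0 < g -> rnorm (T z - a) <= eps - g ->
  rnorm (b - a) <= g -> fv b <= fv a + rnorm (b - a) / g * rnorm z.
Proof.
move=> g0 hz hba; set s := rnorm (b - a) / g.
have s0 : 0 <= s by rewrite divr_ge0 ?rnorm_ge0 ?ltW.
have s1 : s <= 1 by rewrite ler_pdivrMr // mul1r.
have sg : rnorm (b - a) = s * g by rewrite /s divfK ?gt_eqF.
apply/ler_addgt0Pr => h h0.
have [_ [y hy <-] hlt] := inf_adherent h0 (fv_hasinf a).
have s10 : 0 <= 1 - s by rewrite subr_ge0.
set w := (1 - s)%:C *: y + s%:C *: z.
have hw : Kset b w.
  rewrite /Kset /= (comb_eq _ _ a).
  apply: le_trans (rnormD _ _ _ _) _; rewrite rnormB sg.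
  apply: le_trans (lerD (rnormD _ _ _ _) (lexx _)) _.
  rewrite (rnormZ _ _ _ _ s10) (rnormZ _ _ _ _ s0).
  have hy' : rnorm (T y - a) <= eps := hy.
  nra.
have := fv_le _ _ hw.
have : rnorm w <= (1 - s) * rnorm y + s * rnorm z.
  by apply: le_trans (rnormD _ _ _ _) _; rewrite (rnormZ _ _ _ _ s10) (rnormZ _ _ _ _ s0).
have := rnorm_ge0 _ _ y; have := rnorm_ge0 _ _ z.
rewrite -/(fv a) in hlt.
nra.
Qed.

Lemma fv_cont : continuous fv.
Proof.
move=> x0.
have e4 : 0 < eps / 4 by rewrite divr_gt0.
have [z hz] := @dense_pt _ _ T Tdense x0 (eps / 4) e4.
set rz := rnorm z.
have rz0 : 0 <= rz := rnorm_ge0 _ _ z.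
rewrite /continuous_at; apply/cvgrPdist_lt; move=> e e0.
have d0 : 0 < Num.min (eps / 4) (e * eps / (2 * (rz + 1))).
  rewrite lt_min e4 /=; apply: divr_gt0; first exact: mulr_gt0.
  by apply: mulr_gt0; lra.
move: (near_pt _ _ x0 _ d0); apply: filterS => x.
rewrite lt_min => /andP [h1 h2].
have hxx : rnorm (x0 - x) = rnorm (x - x0) by rewrite rnormB.
have up : fv x <= fv x0 + rnorm (x - x0) / (eps / 2) * rz.
  apply: shift; first by rewrite divr_gt0.
    by apply: ltW; lra.
  by lra.
have dn : fv x0 <= fv x + rnorm (x0 - x) / (eps / 2) * rz.
  apply: shift; first by rewrite divr_gt0.
    have := rnormD _ _ (T z - x0) (x0 - x); rewrite addrA subrK.
    by lra.
  by lra.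
rewrite hxx in dn.
have key : rnorm (x - x0) / (eps / 2) * rz < e.
  have hr : 0 <= rnorm (x - x0) := rnorm_ge0 _ _ _.
  have p0 : 0 < 2 * (rz + 1) by apply: mulr_gt0; lra.
  have h2' : rnorm (x - x0) * (2 * (rz + 1)) < e * eps.
    by rewrite -ltr_pdivlMr.
  set r := rnorm (x - x0) in h2' hr *.
  set q := r / (eps / 2).
  have hq : q * eps = 2 * r.
    rewrite /q; field; lra.
  have q0 : 0 <= q by rewrite /q divr_ge0 // ltW // divr_gt0.
  nra.
rewrite ltr_norml; apply/andP; split; lra.
Qed.
End S.



Lemma small_inv (R : realType) (c : R) : 0 < c ->
  exists N : nat, forall n, (N <= n)%N -> n.+1%:R^-1 < c.
Proof.
move=> c0; exists (Num.bound c^-1) => n hn.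
have hc : 0 <= c^-1 by rewrite invr_ge0 ltW.
have h := archi_boundP hc.
rewrite invf_plt ?posrE ?ltr0Sn //; apply: (lt_le_trans h).
by rewrite ler_nat; apply: leq_trans hn _.
Qed.

Lemma near_oo_ex (P : nat -> Prop) : (\forall n \near \oo, P n) ->
  exists N, forall n, (N <= n)%N -> P n.
Proof. by move=> [N _ hN]; exists N => n hn; apply: hN. Qed.

Section Ex.
Variable R : realType.
Variable H : completeNormedModType R[i].
Variable ip : H -> H -> R[i].
Hypothesis Hip : inner_product_of_norm ip.
Variable T : {linear H -> H}.
Hypothesis Tcont : continuous T.
Hypothesis Tdense : closure (range T) = setT.
Variable eps : R.
Hypothesis heps : 0 < eps.

Local Notation K := (@Kset _ _ T eps).
Local Notation f := (@fv _ _ T eps).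

Lemma mid_est (x a b : H) : K x a -> K x b ->
  rnorm (a - b) ^+ 2 <= 2 * rnorm a ^+ 2 + 2 * rnorm b ^+ 2 - 4 * f x ^+ 2.
Proof.
move=> ha hb.
have h2 : 0 <= (2%:R^-1 : R) by rewrite invr_ge0.
have hm : K x ((2%:R^-1 : R)%:C *: (a + b)).
  rewrite /Kset /=.
  have -> : T ((2%:R^-1 : R)%:C *: (a + b)) - x =
            (2%:R^-1 : R)%:C *: ((T a - x) + (T b - x)).
    have hc : (2%:R^-1 : R) + 2%:R^-1 = 1 by field.
    have hx : (2%:R^-1 : R)%:C *: (x + x) = x.
      by rewrite scalerDr -scalerDl -rmorphD /= hc scale1r.
    by rewrite linearZ linearD /= addrACA -opprD scalerBr hx.
  rewrite rnormZ //.
  have := rnormD _ _ (T a - x) (T b - x).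
  have ha' : rnorm (T a - x) <= eps := ha.
  have hb' : rnorm (T b - x) <= eps := hb.
  lra.
have := @fv_le _ _ T Tdense eps heps _ _ hm; rewrite rnormZ //.
have := @paral _ _ _ Hip a b.
have := @fv_ge0 _ _ T Tdense eps heps x.
have := rnorm_ge0 _ _ (a + b).
nra.
Qed.

Lemma Cpos (e : R[i]) : 0 < e -> 0 < complex.Re e.
Proof. by rewrite ltcE => /andP[]. Qed.

Lemma exists_ext (x : H) : exists y, is_extremal_vector T x eps y.
Proof.
set d := f x.
have hi := @fv_hasinf _ _ T Tdense eps heps x.
have d0 : 0 <= d := @fv_ge0 _ _ T Tdense eps heps x.
have : forall n : nat, exists y, K x y /\ rnorm y < d + n.+1%:R^-1.
  move=> n; have hn : 0 < (n.+1%:R^-1 : R) by rewrite invr_gt0 ltr0Sn.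
  by have [_ [y hy <-] hlt] := inf_adherent hn hi; exists y.
move=> /choice [u hu].
have ad n : d <= rnorm (u n) by apply: (@fv_le _ _ T Tdense eps heps); case: (hu n).
have cu : cauchy_ex (u @ \oo).
  move=> e epos; have e0 := Cpos _ epos; set e' := complex.Re e in e0.
  set c := Num.min (e' ^+ 2 / (4 * (2 * d + 1))) 1.
  have c0 : 0 < c.
    rewrite lt_min ltr01 andbT divr_gt0 ?exprn_gt0 //; lra.
  have c1 : c <= 1 by rewrite ge_min lexx orbT.
  have c2 : c * (4 * (2 * d + 1)) <= e' ^+ 2.
    rewrite -ler_pdivlMr; last lra.
    by rewrite ge_min lexx.
  have [N hN] := small_inv _ _ c0.
  exists (u N); exists N => // n /= hn.
  rewrite -ball_normE /= rnorm_lt //.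
  have := mid_est _ _ _ (proj1 (hu N)) (proj1 (hu n)).
  have := hN N (leqnn N); have := hN n hn.
  have := proj2 (hu N); have := proj2 (hu n).
  have := ad N; have := ad n.
  have := rnorm_ge0 _ _ (u N - u n).
  set r := rnorm (u N - u n); set a := rnorm (u N); set b := rnorm (u n).
  set dN := (N.+1%:R^-1 : R); set dn := (n.+1%:R^-1 : R).
  move=> r0 hb ha hb2 ha2 hdn hdN hest.
  have hdN0 : 0 <= dN by rewrite invr_ge0.
  have hdn0 : 0 <= dn by rewrite invr_ge0.
  have e00 : 0 < e' := e0.
  have A1 : a ^+ 2 - d ^+ 2 <= c * (2 * d + 1) by nra.
  have B1 : b ^+ 2 - d ^+ 2 <= c * (2 * d + 1) by nra.
  have : r ^+ 2 < e' ^+ 2 by nra.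
  nra.
have cv : cvg (u @ \oo) by apply: cauchy_cvg; apply: cauchy_exP.
set y := lim (u @ \oo).
have cT : T \o u @ \oo --> T y by apply: cvg_comp cv (Tcont y).
have hy : K x y.
  rewrite /Kset /=; apply/ler_addgt0Pr => h h0.
  have h0' : 0 < h%:C by rewrite ltcR.
  have [N hN] := near_oo_ex _ (cvgr_dist_lt _ _ cT _ h0').
  have := hN N (leqnn N); rewrite /= rnorm_lt //= => hlt.
  have := rnormD _ _ (T y - T (u N)) (T (u N) - x); rewrite addrA subrK.
  have : rnorm (T (u N) - x) <= eps := proj1 (hu N).
  lra.
have le1 : rnorm y <= d.
  apply/ler_addgt0Pr => h h0.
  have h2 : 0 < h / 2 by rewrite divr_gt0.
  have h2' : 0 < (h / 2)%:C by rewrite ltcR.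
  have [N1 hN1] := near_oo_ex _ (cvgr_dist_lt _ _ cv _ h2').
  have [N2 hN2] := small_inv _ _ h2.
  set n := maxn N1 N2.
  have := hN1 n (leq_maxl _ _); rewrite /= rnorm_lt //= => hlt.
  have := hN2 n (leq_maxr _ _).
  have := proj2 (hu n).
  have := rnormD _ _ (y - u n) (u n); rewrite subrK.
  rewrite -/y in hlt; have hlt2 : rnorm (y - u n) < h / 2 := hlt.  have hh : h / 2 + h / 2 = h by field.
  move=> A B C; apply: (le_trans A); apply: ltW.
  have B2 : rnorm (u n) < d + h / 2.
    by apply: (lt_trans B); rewrite ltrD2l.
  by apply: (lt_le_trans (ltrD hlt2 B2)); rewrite addrCA hh.
exists y; split => //.
apply/eqP; rewrite eq_le le1 /=.
exact: (@fv_le _ _ T Tdense eps heps).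
Qed.
End Ex.


Close Scope complex_scope.

Theorem mainTheorem7 (R : realType) (H : completeNormedModType R[i])
  (ip : H -> H -> R[i]) (Hip : inner_product_of_norm ip)
  (Hsep : separable_space H) (Hinf : infinite_dimensional H)
  (T : {linear H -> H}) (Tcont : continuous T)
  (Tdense : closure (range T) = setT)
  (eps : R) (heps : 0 < eps) :
  {within [set x0 : H | eps < rnorm x0],
    continuous (fun x : H => rnorm (extremal_vector T eps x))}.
Proof.
have eqf : (fun x => rnorm (extremal_vector T eps x)) = @fv _ _ T eps.
  apply: funext => x; rewrite /extremal_vector.
  by case: (xgetPex 0 (@exists_ext _ _ _ Hip _ Tcont Tdense _ heps x)).
rewrite eqf; apply: continuous_subspaceT.
exact: (@fv_cont _ _ _ Tdense _ heps).
Qed.
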